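(* Let $e\geqslant 1$ be an integer and $b\geqslant 2$ an even integer. Assume that for every integer $a$ there exists an $(e,b)$-happy number $h$ with $h\equiv a\pmod{b-1}$. Then for every integer $a$ there exists an $(e,b)$-happy number $h'$ with $h'\equiv a\pmod{(b-1)^e}$.
   Context: For a positive integer $n=\sum_{j=0}^k a_j b^j$ with $0\leqslant a_j<b$, $T_{e,b}(n)=\sum_{j=0}^k a_j^e$; $T_{e,b}^r$ is the $r$-th iterate, $T_{e,b}^0(n)=n$. A positive integer $n$ is $(e,b)$-happy if $T_{e,b}^r(n)=1$ for some $r\geqslant 0$. *)

(* Defs.v *)
From mathcomp Require Import all_boot all_order all_algebra.
Set Implicit Arguments. Unset Strict Implicit. Unset Printing Implicit Defensive.

(* Sum of e-th powers of the base-b digits of n, computed with fuel.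
   With fuel >= n (and b >= 2) the full expansion is processed. *)
Fixpoint digit_pow_sum_fuel (fuel e b n : nat) : nat :=
  match fuel with
  | 0 => 0
  | fuel'.+1 =>
      if n == 0 then 0
      else (n %% b) ^ e + digit_pow_sum_fuel fuel' e b (n %/ b)
  end.

Definition T (e b n : nat) : nat := digit_pow_sum_fuel n e b n.

Definition happy (e b n : nat) : Prop :=
  0 < n /\ exists r : nat, iter r (T e b) n = 1.

(* Main.v *)
Require Import Defs.
From mathcomp Require Import all_boot all_order all_algebra.
From mathcomp Require Import cyclic.
From mathcomp Require Import zify.
Import GRing.Theory Num.Theory.

Lemma fuel_indep e b : 1 < b -> forall f g n, n <= f -> n <= g ->
  digit_pow_sum_fuel f e b n = digit_pow_sum_fuel g e b n.
Proof.
move=> hb; elim=> [|f IH] [|g] n /= hf hg.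
- by [].
- by move: hf; rewrite leqn0 => /eqP ->.
- by move: hg; rewrite leqn0 => /eqP ->.
case: eqP => // /eqP n0.
have lt : n %/ b < n by rewrite ltn_Pdiv // lt0n.
by rewrite (IH g) //; lia.
Qed.

Lemma T_step e b n d : 1 <= e -> 1 < b -> d < b -> T e b (n * b + d) = T e b n + d ^ e.
Proof.
move=> he hb hd.
case N0: (n * b + d == 0).
  have [-> ->] : n = 0 /\ d = 0 by move/eqP: N0; lia.
  by rewrite /T /= exp0n.
rewrite /T.
set N := n * b + d.
have eq : N = N.-1.+1 by move/negbT: N0; rewrite /N; lia.
rewrite {1}eq /= -/N N0 addnC.
have -> : N %% b = d by rewrite /N modnMDl modn_small.
have -> : N %/ b = n by rewrite /N divnMDl ?(ltnW hb) // divn_small // addn0.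
congr (_ + _); apply: fuel_indep => //.
rewrite /N; move/negbT: N0; case: (posnP n) => [->|np] //= _; nia.
Qed.

Lemma T1 e b : 1 <= e -> 1 < b -> T e b 1 = 1.
Proof. move=> he hb; have := @T_step e b 0 1 he hb hb; rewrite mul0n add0n => ->; by rewrite exp1n. Qed.

Lemma T_shift e b n j : 1 <= e -> 1 < b -> T e b (n * b ^ j) = T e b n.
Proof.
move=> he hb; elim: j => [|j IH]; first by rewrite expn0 muln1.
by rewrite expnSr mulnA -[_ * b]addn0 T_step ?exp0n ?addn0 // ltnW.
Qed.

Lemma happy_T e b x y : 1 <= e -> 1 < b -> 0 < x -> T e b x = T e b y -> happy e b y -> happy e b x.
Proof.
move=> he hb x0 Txy [_ [r hr]]; split => //; exists r.+1.
by rewrite iterSr Txy -iterSr iterS hr T1.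
Qed.

Lemma happy_pre e b x : 1 <= e -> 1 < b -> 0 < x -> happy e b (T e b x) -> happy e b x.
Proof. by move=> he hb x0 [_ [r hr]]; split => //; exists r.+1; rewrite iterSr. Qed.

Section Constr.
Variables (e b p : nat).
Definition Q := b ^ p.+2.
Definition Af n := n * Q + 1.
Definition Bf n := n * Q + b.

Hypothesis he : 1 <= e.
Hypothesis hb : 1 < b.

Lemma T_Af n : T e b (Af n) = T e b n + 1.
Proof.
rewrite /Af /Q expnSr mulnA T_step ?T_shift ?exp1n //.
Qed.

Lemma T_Bf n : T e b (Bf n) = T e b n + 1.
Proof.
rewrite /Bf /Q.
have -> : n * b ^ p.+2 + b = ((n * b ^ p) * b + 1) * b + 0.
  by rewrite !expnSr !mulnA; lia.
rewrite T_step ?T_step ?T_shift ?exp1n ?exp0n ?addn0 //; lia.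
Qed.

Lemma T_iterA s : T e b (iter s Af 0) = s.
Proof. elim: s => [|s IH] //=; by rewrite T_Af IH addn1. Qed.

Lemma T_iterB r x : T e b (iter r Bf x) = T e b x + r.
Proof. elim: r => [|r IH] /=; [by rewrite addn0 | by rewrite T_Bf IH; lia]. Qed.

Variable M : nat.
Hypothesis hQ : Q %% M = 1 %% M.

Lemma mod_iterA s : iter s Af 0 = s %[mod M].
Proof.
elim: s => [|s IH] //=; rewrite /Af -modnDml -modnMml IH modnMml -modnMmr hQ modnMmr muln1.
by rewrite modnDml addn1.
Qed.

Lemma mod_iterB r x : iter r Bf x = x + r * b %[mod M].
Proof.
elim: r => [|r IH] /=; first by rewrite mul0n addn0.
rewrite /Bf -modnDml -modnMml IH modnMml -modnMmr hQ modnMmr muln1 modnDml.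
by rewrite mulSnr addnA.
Qed.
End Constr.

Theorem corollary2p2 (e b : nat) :
  1 <= e -> 2 <= b -> ~~ odd b ->
  (forall a : int, exists h : nat,
      happy e b h /\ (h%:Z = a %[mod (b.-1)%:Z])%Z) ->
  forall a : int, exists h' : nat,
      happy e b h' /\ (h'%:Z = a %[mod ((b.-1) ^ e)%:Z])%Z.
Proof.
move=> he hb _ hyp a.
set m := b.-1.
have bm : b = m.+1 by rewrite /m; lia.
have m0 : 0 < m by rewrite /m; lia.
set M := m ^ e.
have M0 : 0 < M by rewrite /M expn_gt0 m0.
have tot0 : 0 < totient M by rewrite totient_gt0.
set p := (2 * totient M).-2.
have hQ : Q b p %% M = 1 %% M.
  rewrite /Q (_ : p.+2 = totient M * 2); last by rewrite /p; lia.
  rewrite expnM -modnXm Euler_exp_totient ?modnXm ?exp1n //.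
  by rewrite bm coprimeXr // coprimeSn.
have [k0 [hk0 k0a]] := hyp a.
have k00 : 0 < k0 by case: hk0.
set K := k0 * b ^ M.
have KM : M <= K.
  have : M < b ^ M by apply: ltn_expl.
  rewrite /K; nia.
have hK : happy e b K.
  apply: (@happy_T e b K k0) => //; first by rewrite /K muln_gt0 k00 expn_gt0; lia.
  by rewrite /K T_shift.
have Ka : (K%:Z = a %[mod m%:Z])%Z.
  rewrite -k0a !modz_nat; congr Posz.
  by rewrite /K -modnMmr -modnXm bm -addn1 modnDl modnXm exp1n modnMmr muln1 addn1.
have [t ut] : exists t : nat, (((a - Posz K)%R) %% (Posz M))%Z = (Posz t).
  have : (0 <= (((a - Posz K)%R) %% (Posz M))%Z)%R by apply: modz_ge0; rewrite eqz_nat -lt0n.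
  by case: (((a - Posz K)%R) %% (Posz M))%Z => // n _; exists n.
have tM : t < M.
  have : ((((a - Posz K)%R) %% (Posz M))%Z < (Posz M))%R by apply: ltz_pmod; rewrite ltz_nat.
  by rewrite ut ltz_nat.
have mt : m %| t.
  have : ((Posz m) %| (Posz t))%Z; last by [].
  rewrite -ut.
  have hmM : ((Posz m) %| (Posz M))%Z by rewrite dvdzE /= /M dvdn_exp.
  have hmaK : ((Posz m) %| (a - Posz K)%R)%Z.
    move/eqP: Ka; rewrite eq_sym eqz_mod_dvd //.
  by rewrite /modz rpredB // dvdz_mull.
set r := t %/ m.
have tr : t = r * m by rewrite /r divnK.
have rK : r <= K.
  have : r <= r * m by rewrite leq_pmulr.
  move=> h; apply: leq_trans h _; rewrite -tr; exact: (leq_trans (ltnW tM) KM).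
set N := iter r (Bf b p) (iter (K - r) (Af b p) 0).
have TN : T e b N = K by rewrite /N (@T_iterB e b p he hb) (@T_iterA e b p he hb) subnK.
exists N; split.
  apply: (@happy_pre e b N) => //; last by rewrite TN.
  rewrite lt0n; apply/negP => /eqP N0; move: TN; rewrite N0 => T0.
  have K0 : K = 0 by rewrite -T0.
  by move: (leq_trans M0 KM); rewrite K0.
have hNm : N %% M = (K + t) %% M.
  rewrite /N (@mod_iterB b p M hQ) -modnDml (@mod_iterA b p M hQ) modnDml; congr modn.
  by rewrite tr bm mulnSr [r * m + r]addnC addnA (subnK rK).
rewrite !modz_nat hNm -modz_nat PoszD -ut modzDmr.
by rewrite addrC subrK.
Qed.
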